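(* Let $d\ge 2$ and identify $F_d(\mathfrak B)^2$ with $G_d^2\subset K[Y_d,Z_d]$ as described in the context. For each $n\ge2$ and each partition $\lambda=(\lambda_1,\lambda_2)\vdash n$, the following elements form a maximal linearly independent system of highest weight vectors of $GL_d$-submodules of $G_d^2$ isomorphic to $W(\lambda)$ (i.e. every such highest weight vector is a linear combination of them, and their number equals the multiplicity of $W(\lambda)$): $w^{(j)}_{(n)}=y_1^jz_1^{n-j}$ for $j=1,\dots,n-1$ if $\lambda=(n)$; and $w^{(j)}_\lambda=y_1^j(y_1z_2-y_2z_1)^{\lambda_2}z_1^{\lambda_1-\lambda_2-j}$ for $j=0,1,\dots,\lambda_1-\lambda_2$ if $\lambda_2>0$.
   Context: $K$ is a field of characteristic $0$. $\mathfrak B$ is the variety of bicommutative algebras (identities $(x_1x_2)x_3=(x_1x_3)x_2$, $x_1(x_2x_3)=x_2(x_1x_3)$) with free algebra $F_d(\mathfrak B)$ on $x_1,\dots,x_d$. Model: let $K[Y_d,Z_d]$ be the commutative polynomial ring in $y_1,\dots,y_d,z_1,\dots,z_d$, and $G_d$ the algebra with basis $\{x_1,\dots,x_d\}\cup\{Y^\alpha Z^\beta:|\alpha|>0,|\beta|>0\}$ and multiplication $x_ix_j=y_iz_j$, $x_i\cdot(Y^\alpha Z^\beta)=y_iY^\alpha Z^\beta$, $(Y^\alpha Z^\beta)\cdot x_j=Y^\alpha Z^\beta z_j$, $(Y^\alpha Z^\beta)(Y^\gamma Z^\delta)=Y^{\alpha+\gamma}Z^{\beta+\delta}$; it is known that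 $x_i\mapsto x_i$ gives an isomorphism $F_d(\mathfrak B)\cong G_d$ of multigraded algebras, so $F_d(\mathfrak B)^2$ is identified with $G_d^2$, the span of monomials of positive degree in both the $y$'s and the $z$'s. $GL_d$ acts on $G_d^2$ by acting on $\mathrm{span}(y_i)$ and on $\mathrm{span}(z_i)$ in the same way as on $\mathrm{span}(x_i)$, extended multiplicatively. $W(\lambda)$ is the irreducible polynomial $GL_d$-module indexed by $\lambda$; a highest weight vector of a submodule isomorphic to $W(\lambda)$ is a nonzero element of multidegree $\lambda$ (degree $\lambda_i$ in the pair $y_i,z_i$) generating it, equivalently annihilated by the derivations $y_j\mapsto y_i,z_j\mapsto z_i$ (other variables $\mapsto 0$) for all $i<j$. *)

(* Defs.v *)
From HB Require Import structures.
From mathcomp Require Import all_boot all_order all_algebra.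
Unset Printing Implicit Defensive.
Import GRing.Theory.
Local Open Scope ring_scope.

(* Commutative polynomial ring in n variables X_0, ..., X_(n-1) over K,
   built as iterated univariate polynomials: MP K (n+1) = {poly MP K n},
   the outermost variable being X_n. *)
Fixpoint MP (K : fieldType) (n : nat) : comNzRingType :=
  match n with
  | 0 => K
  | n'.+1 => {poly MP K n'}
  end.

Fixpoint mvar (K : fieldType) (n k : nat) : MP K n :=
  match n return MP K n with
  | 0 => 0
  | n'.+1 => if k == n' then ('X : {poly MP K n'}) else (mvar K n' k)%:P
  end.

Fixpoint mconst (K : fieldType) (n : nat) : K -> MP K n :=
  match n return K -> MP K n with
  | 0 => fun c => c
  | n'.+1 => fun c => (mconst K n' c)%:P
  end.

(* coefficient of the monomial prod_(k<n) X_k^(e k) *)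
Fixpoint mcoef (K : fieldType) (n : nat) : MP K n -> (nat -> nat) -> K :=
  match n return MP K n -> (nat -> nat) -> K with
  | 0 => fun p _ => p
  | n'.+1 => fun (p : {poly MP K n'}) e => mcoef K n' (p`_(e n')) e
  end.

Fixpoint pder (K : fieldType) (n k : nat) : MP K n -> MP K n :=
  match n return MP K n -> MP K n with
  | 0 => fun _ => 0
  | n'.+1 => fun (p : {poly MP K n'}) =>
      if k == n' then deriv p else map_poly (pder K n' k) p
  end.

(* K[Y_d, Z_d]: y_i = X_i, z_i = X_(d+i), for i < d (0-based indices,
   so y_1, z_1 of the paper are y K d 0, z K d 0). *)
Definition KYZ (K : fieldType) (d : nat) := MP K (d + d).
Definition y (K : fieldType) (d i : nat) : KYZ K d := mvar K (d + d) i.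
Definition z (K : fieldType) (d i : nat) : KYZ K d := mvar K (d + d) (d + i).

Definition inG2 (K : fieldType) (d : nat) (f : KYZ K d) : Prop :=
  forall e : nat -> nat, mcoef K (d + d) f e != 0 ->
    (0 < \sum_(i < d) e i)%N /\ (0 < \sum_(i < d) e (d + i))%N.

Definition wt (l1 l2 : nat) (i : nat) : nat :=
  if i == 0%N then l1 else if i == 1%N then l2 else 0%N.

Definition has_multideg (K : fieldType) (d : nat) (lam : nat -> nat)
    (f : KYZ K d) : Prop :=
  forall e : nat -> nat, mcoef K (d + d) f e != 0 ->
    forall i, (i < d)%N -> (e i + e (d + i))%N = lam i.

Definition Dder (K : fieldType) (d i j : nat) (f : KYZ K d) : KYZ K d :=
  y K d i * pder K (d + d) j f + z K d i * pder K (d + d) (d + j) f.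

Definition is_hwv (K : fieldType) (d : nat) (lam : nat -> nat)
    (f : KYZ K d) : Prop :=
  [/\ f != 0, inG2 K d f, has_multideg K d lam f &
      forall i j, (i < j)%N -> (j < d)%N -> Dder K d i j f = 0].

Definition max_hwv_system (K : fieldType) (d : nat) (lam : nat -> nat)
    (N : nat) (w : 'I_N -> KYZ K d) : Prop :=
  [/\ forall k, is_hwv K d lam (w k),
      forall c : 'I_N -> K,
        \sum_(k < N) mconst K (d + d) (c k) * w k = 0 -> forall k, c k = 0
    & forall f, is_hwv K d lam f ->
        exists c : 'I_N -> K, f = \sum_(k < N) mconst K (d + d) (c k) * w k].

(* Main.v *)
Require Import Defs.
From HB Require Import structures.
From mathcomp Require Import all_boot all_order all_algebra zify ring.
From Stdlib Require Import Classical.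
Import GRing.Theory.
Local Open Scope ring_scope.

Section S.
Variable K : fieldType.

Definition upd (e : nat -> nat) (k v : nat) : nat -> nat :=
  fun i => if i == k then v else e i.

Lemma mcoef_dep n (p : MP K n) e e' :
  (forall k, (k < n)%N -> e k = e' k) -> mcoef K n p e = mcoef K n p e'.
Proof.
elim: n p e e' => [|n IH] p e e' H //=.
rewrite (H n) //; apply: IH => k hk; apply: H; exact: ltnW.
Qed.

Lemma mcoef_ext0 n (p : MP K n) e e' :
  (forall k, e k = e' k) -> mcoef K n p e = mcoef K n p e'.
Proof. by move=> H; apply: mcoef_dep => k _. Qed.

Lemma mcoefD n (p q : MP K n) e : mcoef K n (p + q) e = mcoef K n p e + mcoef K n q e.
Proof.
elim: n p q e => [|n IH] p q e //=.
by rewrite coefD IH.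
Qed.

Lemma mcoef0 n e : mcoef K n 0 e = 0.
Proof. elim: n => [|n IH] //=. by rewrite coef0 IH. Qed.

Lemma mcoefN n (p : MP K n) e : mcoef K n (- p) e = - mcoef K n p e.
Proof.
elim: n p e => [|n IH] p e //=.
by rewrite coefN IH.
Qed.

Lemma mcoefB n (p q : MP K n) e : mcoef K n (p - q) e = mcoef K n p e - mcoef K n q e.
Proof. by rewrite mcoefD mcoefN. Qed.

Lemma mcoefMn n (p : MP K n) m e : mcoef K n (p *+ m) e = mcoef K n p e *+ m.
Proof.
elim: m => [|m IH]; first by rewrite !mulr0n mcoef0.
by rewrite !mulrS mcoefD IH.
Qed.

Lemma mcoef_sum n I (r : seq I) (P : pred I) (F : I -> MP K n) e :
  mcoef K n (\sum_(i <- r | P i) F i) e = \sum_(i <- r | P i) mcoef K n (F i) e.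
Proof.
by apply: (big_morph (fun p => mcoef K n p e)) => [p q|]; rewrite ?mcoefD ?mcoef0.
Qed.

Lemma mcoef_eq0 n (p : MP K n) : (forall e, mcoef K n p e = 0) -> p = 0.
Proof.
elim: n p => [|n IH] p H; first exact: (H (fun _ => 0%N)).
apply/polyP => i; rewrite coef0; apply: IH => e.
have := H (upd e n i); rewrite /= /upd eqxx => <-.
by apply: mcoef_dep => k hk; rewrite (ltn_eqF hk).
Qed.

Lemma mcoef_CM n c (p : MP K n) e : mcoef K n (mconst K n c * p) e = c * mcoef K n p e.
Proof.
elim: n p e => [|n IH] p e //=.
by rewrite coefCM IH.
Qed.

Lemma mcoef_C n c e : mcoef K n (mconst K n c) e = if [forall i : 'I_n, e i == 0%N] then c else 0.
Proof.
elim: n e => [|n IH] e /=; first by case: ifP => // /negP[]; apply/forallP => -[].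
rewrite coefC.
have -> : [forall i : 'I_n.+1, e i == 0%N] = [forall i : 'I_n, e i == 0%N] && (e n == 0%N).
  apply/forallP/andP => [H|[/forallP H1 /eqP H2] i].
    split; last by have := H ord_max.
    by apply/forallP => i; have := H (widen_ord (leqnSn n) i).
  case: (ltngtP i n) => hi; first by have := H1 (Ordinal hi).
    by have := ltn_ord i; rewrite ltnS leqNgt hi.
  by rewrite hi H2.
case: (e n =P 0%N) => [_|ne] /=; first by rewrite andbT IH.
by rewrite andbF mcoef0.
Qed.

Lemma mconst1 n : mconst K n 1 = 1.
Proof. elim: n => [|n IH] //=. by rewrite IH. Qed.

Lemma mcoef1 n e : mcoef K n 1 e = if [forall i : 'I_n, e i == 0%N] then 1 else 0.
Proof. by rewrite -(mconst1 n) mcoef_C. Qed.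

Lemma mcoef_XM n k (p : MP K n) e : (k < n)%N ->
  mcoef K n (mvar K n k * p) e =
  if (0 < e k)%N then mcoef K n p (upd e k (e k - 1)) else 0.
Proof.
elim: n p e => [|n IH] p e hk //=.
case: (k =P n) => [->|nk].
  rewrite coefXM; case: (e n) => [|m] //=; first by rewrite mcoef0.
  rewrite /upd eqxx subn1 /=; apply: mcoef_dep => i hi.
  by rewrite (ltn_eqF hi).
have hk' : (k < n)%N by rewrite ltn_neqAle -ltnS hk andbT; apply/eqP.
rewrite coefCM IH //; case: ifP => // _.
by rewrite /upd; case: (n =P k) => // e1; rewrite e1 in nk.
Qed.

Lemma mcoef_XnM n k m (p : MP K n) e : (k < n)%N ->
  mcoef K n (mvar K n k ^+ m * p) e =
  if (m <= e k)%N then mcoef K n p (upd e k (e k - m)) else 0.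
Proof.
move=> hk; elim: m p e => [|m IH] p e.
  by rewrite expr0 mul1r subn0; apply: mcoef_ext0 => i; rewrite /upd; case: eqP => // ->.
rewrite exprSr -mulrA IH; case: ifP => hm.
  rewrite mcoef_XM // /upd eqxx.
  have [hm2|hm2] := ltnP m (e k).
    rewrite subn_gt0 hm2; apply: mcoef_ext0 => i; case: eqP => // _; lia.
  have -> : (e k - m = 0)%N by lia.
  by [].
by case: ifP => //; move/ltnW; rewrite hm.
Qed.

Lemma pder0 n k : pder K n k 0 = 0.
Proof.
elim: n => [|n IH] //=; case: ifP => _; [exact: deriv0 | exact: map_poly0].
Qed.

Lemma mcoef_pder n k (p : MP K n) e : (k < n)%N ->
  mcoef K n (pder K n k p) e = (e k).+1%:R * mcoef K n p (upd e k (e k).+1).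
Proof.
elim: n p e => [|n IH] p e hk //=.
case: (k =P n) => [->|nk].
  rewrite coef_deriv mcoefMn /upd /= eqxx mulr_natl; congr (_ *+ _).
  by apply: mcoef_dep => i hi; rewrite (ltn_eqF hi).
have hk' : (k < n)%N by rewrite ltn_neqAle -ltnS hk andbT; apply/eqP.
rewrite coef_map_id0 ?pder0 // IH //; congr (_ * _).
by rewrite /upd; case: (n =P k) => // e1; rewrite e1 in nk.
Qed.

Lemma pderD n k (p q : MP K n) : (k < n)%N -> pder K n k (p + q) = pder K n k p + pder K n k q.
Proof.
move=> hk; apply/eqP; rewrite -subr_eq0; apply/eqP/mcoef_eq0 => e.
by rewrite mcoefB mcoefD !mcoef_pder // mcoefD mulrDr subrr.
Qed.

Lemma pderN n k (p : MP K n) : (k < n)%N -> pder K n k (- p) = - pder K n k p.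
Proof.
move=> hk; apply/eqP; rewrite -subr_eq0; apply/eqP/mcoef_eq0 => e.
by rewrite mcoefB mcoefN !mcoef_pder // mcoefN mulrN subrr.
Qed.

Lemma pderB n k (p q : MP K n) : (k < n)%N -> pder K n k (p - q) = pder K n k p - pder K n k q.
Proof. by move=> hk; rewrite pderD // pderN. Qed.

Lemma pder_CM n k c (p : MP K n) : (k < n)%N ->
  pder K n k (mconst K n c * p) = mconst K n c * pder K n k p.
Proof.
move=> hk; apply/eqP; rewrite -subr_eq0; apply/eqP/mcoef_eq0 => e.
by rewrite mcoefB !mcoef_CM !mcoef_pder // mcoef_CM mulrCA subrr.
Qed.

Lemma pder_sum n k I (r : seq I) (P : pred I) (F : I -> MP K n) : (k < n)%N ->
  pder K n k (\sum_(i <- r | P i) F i) = \sum_(i <- r | P i) pder K n k (F i).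
Proof.
by move=> hk; apply: (big_morph (pder K n k)) => [p q|]; rewrite ?pderD ?pder0.
Qed.

Lemma pderM n k (p q : MP K n) : (k < n)%N ->
  pder K n k (p * q) = pder K n k p * q + p * pder K n k q.
Proof.
elim: n p q => [|n IH] p q hk //=.
case: (k =P n) => [_|nk]; first exact: derivM.
have hk' : (k < n)%N by rewrite ltn_neqAle -ltnS hk andbT; apply/eqP.
apply/polyP => i.
rewrite coef_map_id0 ?pder0 // coefD !coefM pder_sum // -big_split /=.
apply: eq_bigr => j _; rewrite IH // !coef_map_id0 ?pder0 //.
Qed.

Lemma pder1 n k : (k < n)%N -> pder K n k 1 = 0.
Proof.
move=> hk; apply: mcoef_eq0 => e; rewrite mcoef_pder // mcoef1.
case: forallP => [H|_]; last by rewrite mulr0.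
by have := H (Ordinal hk); rewrite /upd /= eqxx.
Qed.

Lemma pder_var n k m : (k < n)%N -> (m < n)%N ->
  pder K n k (mvar K n m) = if k == m then 1 else 0.
Proof.
elim: n => [|n IH] hk hm //=.
case: (k =P n) => [->|nk]; case: (m =P n) => [->|nm].
- by rewrite derivX eqxx.
- by rewrite derivC; case: eqP => // e1; rewrite e1 in nm.
- have hk' : (k < n)%N by rewrite ltn_neqAle -ltnS hk andbT; apply/eqP.
  case: eqP => // _; apply/polyP => i; rewrite coef_map_id0 ?pder0 // coefX coef0.
  by case: (i == 1%N); rewrite ?pder1 ?pder0.
- have hk' : (k < n)%N by rewrite ltn_neqAle -ltnS hk andbT; apply/eqP.
  have hm' : (m < n)%N by rewrite ltn_neqAle -ltnS hm andbT; apply/eqP.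
  apply/polyP => i; rewrite coef_map_id0 ?pder0 // coefC.
  case: (k =P m) => km; rewrite ?coef1 ?coef0; case: (i == 0%N); rewrite ?pder0 ?IH //.
  - by rewrite km eqxx.
  - by case: eqP.
Qed.

Lemma natr_inj (charK0 : [pchar K] =i pred0) (a b : nat) :
  (a%:R : K) = b%:R -> a = b.
Proof.
have H := (pcharf0P K).1 charK0.
wlog hab : a b / (a <= b)%N => [W|].
  by case: (leqP a b) => h E; [apply: W | symmetry; apply: W => //; apply: ltnW].
move=> E; have : ((b - a)%:R == 0 :> K).
  by rewrite natrB // E subrr.
by rewrite H subn_eq0 => hba; apply/eqP; rewrite eqn_leq hab.
Qed.

Definition Eop n (a b : MP K n) k1 k2 f := a * pder K n k1 f + b * pder K n k2 f.

Section Eops.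
Variables (n : nat) (a b : MP K n) (k1 k2 : nat) (h1 : (k1 < n)%N) (h2 : (k2 < n)%N).
Local Notation E := (Eop n a b k1 k2).

Lemma EopM f g : E (f * g) = E f * g + f * E g.
Proof. rewrite /Eop !pderM //; ring. Qed.

Lemma EopD f g : E (f + g) = E f + E g.
Proof. rewrite /Eop !pderD //; ring. Qed.

Lemma EopB f g : E (f - g) = E f - E g.
Proof. rewrite /Eop !pderB //; ring. Qed.

Lemma Eop_CM c f : E (mconst K n c * f) = mconst K n c * E f.
Proof. rewrite /Eop !pder_CM //; ring. Qed.

Lemma Eop0 : E 0 = 0.
Proof. by rewrite /Eop !pder0 !mulr0 addr0. Qed.

Lemma Eop_sum I (r : seq I) (P : pred I) (F : I -> MP K n) :
  E (\sum_(i <- r | P i) F i) = \sum_(i <- r | P i) E (F i).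
Proof. by apply: (big_morph E) => [p q|]; rewrite ?EopD ?Eop0. Qed.

Lemma Eop_var m : (m < n)%N ->
  E (mvar K n m) = (if k1 == m then a else 0) + (if k2 == m then b else 0).
Proof.
by move=> hm; rewrite /Eop !pder_var //; case: (k1 == m); case: (k2 == m); rewrite ?mulr1 ?mulr0.
Qed.

Lemma Eop_eigM f g al be : E f = al * f -> E g = be * g -> E (f * g) = (al + be) * (f * g).
Proof. by move=> Hf Hg; rewrite EopM Hf Hg; ring. Qed.

Lemma Eop_eigB f g al : E f = al * f -> E g = al * g -> E (f - g) = al * (f - g).
Proof. by move=> Hf Hg; rewrite EopB Hf Hg; ring. Qed.

Lemma Eop_eigX f al m : E f = al * f -> E (f ^+ m) = (al *+ m) * f ^+ m.
Proof.
move=> Hf; elim: m => [|m IH].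
  by rewrite expr0 mulr0n mul0r /Eop !pder1 ?mulr0 ?addr0.
by rewrite exprS (Eop_eigM _ _ _ _ Hf IH) mulrS.
Qed.

End Eops.

Lemma mcoef_euler n k (f : MP K n) e : (k < n)%N ->
  mcoef K n (mvar K n k * pder K n k f) e = (e k)%:R * mcoef K n f e.
Proof.
move=> hk; rewrite mcoef_XM //; case: ifP => hek; last first.
  by move/negbT: hek; rewrite -leqNgt leqn0 => /eqP ->; rewrite mul0r.
rewrite mcoef_pder // /upd eqxx subn1 prednK //; congr (_ * _).
by apply: mcoef_ext0 => i; case: eqP => // ->.
Qed.

Lemma eig_coef (charK0 : [pchar K] =i pred0) n k1 k2 (f : MP K n) c e :
  (k1 < n)%N -> (k2 < n)%N ->
  Eop n (mvar K n k1) (mvar K n k2) k1 k2 f = c%:R * f ->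
  mcoef K n f e != 0 -> (e k1 + e k2)%N = c.
Proof.
move=> h1 h2 H nz.
have := congr1 (fun p => mcoef K n p e) H; rewrite /= /Eop mcoefD !mcoef_euler //.
rewrite (mulr_natl f c) mcoefMn -(mulr_natl (mcoef K n f e) c) -mulrDl -natrD => E.
apply: (natr_inj charK0); apply: (mulIf nz); exact: E.
Qed.

Section Main.
Variables (charK0 : [pchar K] =i pred0) (d l1 l2 : nat) (hd : (2 <= d)%N).

Definition F (a0 a1 ad ad1 : nat) : nat -> nat := fun i =>
  if i == 0%N then a0 else if i == 1%N then a1 else if i == d then ad
  else if i == (d + 1)%N then ad1 else 0%N.

Definition Ee a p := F a p (l1 - a) (l2 - p).

Ltac fcase := move=> ?; rewrite /F /upd;
  repeat (match goal with |- context [?x == ?y] => case: (x =P y) => ? end; simpl); lia.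

Lemma F0 a0 a1 ad ad1 : F a0 a1 ad ad1 0 = a0. Proof. by []. Qed.
Lemma F1 a0 a1 ad ad1 : F a0 a1 ad ad1 1 = a1. Proof. by []. Qed.
Lemma Fd a0 a1 ad ad1 : F a0 a1 ad ad1 d = ad.
Proof. rewrite /F; case: eqP; [lia|]; case: eqP; [lia|]; by rewrite eqxx. Qed.
Lemma Fd1 a0 a1 ad ad1 : F a0 a1 ad ad1 (d + 1) = ad1.
Proof. rewrite /F; case: eqP; [lia|]; case: eqP; [lia|]; case: eqP; [lia|]; by rewrite eqxx. Qed.

Local Notation R := (KYZ K d).

Lemma Dder_coef (g : R) a0 a1 ad ad1 :
  mcoef K (d + d) (Dder K d 0 1 g) (F a0 a1 ad ad1) =
  (if (0 < a0)%N then (a1.+1)%:R * mcoef K (d + d) g (F (a0 - 1) a1.+1 ad ad1) else 0) +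
  (if (0 < ad)%N then (ad1.+1)%:R * mcoef K (d + d) g (F a0 a1 (ad - 1) ad1.+1) else 0).
Proof.
rewrite /Dder /y /z mcoefD !mcoef_XM; try lia.
rewrite F0 addn0 Fd; congr (_ + _); case: ifP => // _; rewrite mcoef_pder; try lia.
  rewrite /upd /= F1; congr (_ * _); apply: mcoef_ext0; fcase.
rewrite /upd; case: eqP; [lia|] => _; rewrite Fd1; congr (_ * _); apply: mcoef_ext0; fcase.
Qed.

Ltac bcase := repeat (match goal with |- context [?x == ?y] => case: (x =P y) => ? end; simpl); lia.

Lemma support (g : R) e : has_multideg K d (wt l1 l2) g -> mcoef K (d + d) g e != 0 ->
  [/\ mcoef K (d + d) g e = mcoef K (d + d) g (Ee (e 0%N) (e 1%N)), (e 0%N <= l1)%N & (e 1%N <= l2)%N].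
Proof.
move=> Hmd nz; have H := Hmd e nz.
have H0 := H 0%N ltac:(lia); have H1 := H 1%N ltac:(lia).
rewrite /wt /= addn0 in H0 H1.
split; try lia.
apply: mcoef_dep => k hk; rewrite /Ee /F.
case: (ltnP k d) => hkd.
  case: k hk hkd => [|[|k]] hk hkd //=.
  have Hk := H k.+2 hkd; move: Hk; rewrite /wt /=; bcase.
have -> : k = (d + (k - d))%N by lia.
have : (k - d < d)%N by lia.
move: (k - d)%N => i hi.
have Hk := H i hi; move: Hk; rewrite /wt.
case: i hi => [|[|i]] hi /=.
- rewrite addn0; bcase.
- bcase.
- bcase.
Qed.

Lemma natr_neq0 m : (m.+1%:R != 0 :> K).
Proof. by rewrite ((pcharf0P K).1 charK0). Qed.

Lemma Dder_rec (g : R) a p : Dder K d 0 1 g = 0 -> (p < l2)%N ->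
  0 = (p.+1)%:R * mcoef K (d + d) g (Ee a p.+1) +
      (if (a < l1)%N then (l2 - p)%:R * mcoef K (d + d) g (Ee a.+1 p) else 0).
Proof.
move=> HD hp; have := Dder_coef g a.+1 p (l1 - a) (l2 - p.+1).
rewrite HD mcoef0 /= subn1 /= => E; rewrite [LHS]E; congr (_ + _).
have -> : (0 < l1 - a)%N = (a < l1)%N by lia.
case: ifP => // hal.
have -> : (l2 - p.+1).+1 = (l2 - p)%N by lia.
by rewrite /Ee; have -> : (l1 - a - 1 = l1 - a.+1)%N by lia.
Qed.

Lemma Dder_rec0 (g : R) p : Dder K d 0 1 g = 0 -> (p < l2)%N ->
  mcoef K (d + d) g (Ee 0 p) = 0.
Proof.
move=> HD hp; have := Dder_coef g 0 p l1.+1 (l2 - p.+1).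
rewrite HD mcoef0 /= subn1 /= add0r.
have -> : (l2 - p.+1).+1 = (l2 - p)%N by lia.
move=> /esym/eqP; rewrite mulf_eq0.
have -> : (l2 - p)%N = (l2 - p.+1).+1 by lia.
rewrite (negbTE (natr_neq0 _)) /= => /eqP <-.
by rewrite /Ee subn0; congr (mcoef _ _ _ (F _ _ _ _)); lia.
Qed.

Lemma kernel (g : R) : has_multideg K d (wt l1 l2) g -> Dder K d 0 1 g = 0 ->
  (forall a, (a <= l1)%N -> mcoef K (d + d) g (Ee a 0) = 0) -> g = 0.
Proof.
move=> Hmd HD H0.
have key : forall p, (p <= l2)%N -> forall a, (a <= l1)%N -> mcoef K (d + d) g (Ee a p) = 0.
  elim => [|p IH] hp a ha; first exact: H0.
  have := @Dder_rec g a p HD hp; case: ifP => hal.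
    rewrite IH // ?mulr0 ?addr0; last by apply: ltnW.
    by move=> /esym/eqP; rewrite mulf_eq0 (negbTE (natr_neq0 _)) => /eqP.
  by rewrite addr0 => /esym/eqP; rewrite mulf_eq0 (negbTE (natr_neq0 _)) => /eqP.
apply: mcoef_eq0 => e; case: (mcoef K (d + d) g e =P 0) => // /eqP nz.
by have [-> h0 h1] := @support g e Hmd nz; apply: key.
Qed.

Lemma low_coef (g : R) a : Dder K d 0 1 g = 0 -> (l2 <= l1)%N -> (a < l2)%N ->
  mcoef K (d + d) g (Ee a 0) = 0.
Proof.
move=> HD hl ha.
suff key : forall a p, (a + p < l2)%N -> mcoef K (d + d) g (Ee a p) = 0.
  by apply: key; rewrite addn0.
elim => [|b IH] p hp; first by apply: Dder_rec0 => //; lia.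
have := @Dder_rec g b p HD ltac:(lia); rewrite IH; last lia.
rewrite mulr0 add0r; case: ifP => hb; last lia.
by move=> /esym/eqP; rewrite mulf_eq0 -[(l2 - p)%N]prednK ?subn_gt0 ?(negbTE (natr_neq0 _)) //; [move/eqP | lia].
Qed.

Lemma mdeg_lin lam (f : R) N (c : 'I_N -> K) (w : 'I_N -> R) :
  has_multideg K d lam f -> (forall k, has_multideg K d lam (w k)) ->
  has_multideg K d lam (f - \sum_(k < N) mconst K (d + d) (c k) * w k).
Proof.
move=> Hf Hw e nz.
case: (classic (forall i, (i < d)%N -> (e i + e (d + i))%N = lam i)) => // Hn.
exfalso; move/eqP: nz; apply.
have f0 : mcoef K (d + d) f e = 0.
  by case: (mcoef K (d + d) f e =P 0) => // /eqP /Hf.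
rewrite mcoefB mcoef_sum f0 big1 ?subrr // => k _.
rewrite mcoef_CM; case: (mcoef K (d + d) (w k) e =P 0) => [->|/eqP /Hw //]; by rewrite mulr0.
Qed.

Lemma Dder_lin i j (f : R) N (c : 'I_N -> K) (w : 'I_N -> R) : (j < d)%N ->
  Dder K d i j (f - \sum_(k < N) mconst K (d + d) (c k) * w k) =
  Dder K d i j f - \sum_(k < N) mconst K (d + d) (c k) * Dder K d i j (w k).
Proof.
move=> hj; rewrite /Dder -!/(Eop _ _ _ _ _ _) EopB ?Eop_sum; try lia.
by congr (_ - _); apply: eq_bigr => k _; rewrite Eop_CM //; lia.
Qed.

Lemma gen N off (w : 'I_N -> R) :
  (off + N <= l1.+1)%N ->
  (forall k, is_hwv K d (wt l1 l2) (w k)) ->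
  (forall (k : 'I_N) a, (a <= l1)%N -> mcoef K (d + d) (w k) (Ee a 0) = (a == k + off)%N%:R) ->
  (forall f, is_hwv K d (wt l1 l2) f -> forall a, (a <= l1)%N ->
       (a < off)%N || (off + N <= a)%N -> mcoef K (d + d) f (Ee a 0) = 0) ->
  max_hwv_system K d (wt l1 l2) N w.
Proof.
move=> hN Hw Hc Hb; split => //.
  move=> c Hs k.
  have := congr1 (fun p => mcoef K (d + d) p (Ee (k + off) 0)) Hs.
  rewrite /= mcoef0 mcoef_sum (bigD1 k) //= big1 => [|j hj].
    by rewrite mcoef_CM Hc ?eqxx ?mulr1 ?addr0 //; have := ltn_ord k; lia.
  rewrite mcoef_CM Hc; last by have := ltn_ord k; lia.
  rewrite eqn_add2r; case: eqP => [e1|]; last by rewrite mulr0.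
  by exfalso; move/eqP: hj; apply; apply: val_inj.
move=> f [fnz fG fmd fD].
exists (fun k => mcoef K (d + d) f (Ee (k + off) 0)).
apply/eqP; rewrite -subr_eq0; apply/eqP.
have Hw' : forall k, has_multideg K d (wt l1 l2) (w k) by move=> k; case: (Hw k).
have HwD : forall k, Dder K d 0 1 (w k) = 0 by move=> k; case: (Hw k) => _ _ _; apply; lia.
apply: kernel; first exact: mdeg_lin.
  rewrite Dder_lin; last lia.
  by rewrite fD // big1 ?subrr // => k _; rewrite HwD mulr0.
move=> a ha; rewrite mcoefB mcoef_sum.
case: (boolP ((a < off) || (off + N <= a))%N) => hb.
  rewrite Hb // big1 ?subrr // => k _; rewrite mcoef_CM Hc //.
  by case: eqP => [e1|]; rewrite ?mulr0 //; have := ltn_ord k; lia.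
have hk : (a - off < N)%N by lia.
rewrite (bigD1 (Ordinal hk)) //= big1 => [|j hj].
  rewrite mcoef_CM Hc // /=.
  have -> : (a - off + off = a)%N by lia.
  by rewrite eqxx mulr1 addr0 subrr.
rewrite mcoef_CM Hc //; case: eqP => [e1|]; last by rewrite mulr0.
by exfalso; move/eqP: hj; apply; apply: val_inj => /=; lia.
Qed.

Local Notation Y0 := (mvar K (d + d) 0).
Local Notation Y1 := (mvar K (d + d) 1).
Local Notation Z0 := (mvar K (d + d) d).
Local Notation Z1 := (mvar K (d + d) (d + 1)).

Lemma mono_coef p q r :
  mcoef K (d + d) (Y0 ^+ p * (Z0 ^+ q * (Z1 ^+ r * 1))) (F p 0 q r) = 1.
Proof.
rewrite mcoef_XnM; last lia.
rewrite F0 leqnn subnn (@mcoef_ext0 _ _ _ (F 0 0 q r)); last fcase.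
rewrite mcoef_XnM; last lia.
rewrite Fd leqnn subnn (@mcoef_ext0 _ _ _ (F 0 0 0 r)); last fcase.
rewrite mcoef_XnM; last lia.
rewrite Fd1 leqnn subnn (@mcoef_ext0 _ _ _ (F 0 0 0 0)); last fcase.
rewrite mcoef1; case: forallP => // H; exfalso; apply: H => i.
by rewrite /F; repeat case: eqP.
Qed.

Local Notation Dl := (Y0 * Z1 - Y1 * Z0).

Ltac eigc := rewrite ?EopB ?EopM ?Eop_var; try lia;
  repeat (match goal with |- context [?x == ?y] => case: (x =P y) => ? end; simpl);
  try lia; ring.

Lemma w_eig (a b : R) k1 k2 (al be ga : R) j p m : (k1 < d + d)%N -> (k2 < d + d)%N ->
  Eop (d + d) a b k1 k2 Y0 = al * Y0 -> Eop (d + d) a b k1 k2 Z0 = be * Z0 ->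
  Eop (d + d) a b k1 k2 Dl = ga * Dl ->
  Eop (d + d) a b k1 k2 (Y0 ^+ j * Dl ^+ p * Z0 ^+ m) =
    (al *+ j + ga *+ p + be *+ m) * (Y0 ^+ j * Dl ^+ p * Z0 ^+ m).
Proof.
move=> h1 h2 HY HZ HD.
apply: Eop_eigM => //; first apply: Eop_eigM => //; exact: Eop_eigX.
Qed.

Lemma binom_split (u v t : R) m : exists s, (u + t * v) ^+ m = u ^+ m + t * s.
Proof.
elim: m => [|m [s IH]]; first by exists 0; rewrite !expr0 mulr0 addr0.
exists (s * (u + t * v) + u ^+ m * v); rewrite exprS IH exprS; ring.
Qed.

Lemma case2_top j : (j <= l1 - l2)%N -> (l2 <= l1)%N ->
  mcoef K (d + d) (Y0 ^+ j * Dl ^+ l2 * Z0 ^+ (l1 - l2 - j)) (Ee (j + l2) 0) = 1.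
Proof.
move=> hj hl.
have [s Hs] := binom_split (Y0 * Z1) (- Z0) Y1 l2.
have -> : Dl = Y0 * Z1 + Y1 * (- Z0) by ring.
rewrite Hs.
have -> : Y0 ^+ j * ((Y0 * Z1) ^+ l2 + Y1 * s) * Z0 ^+ (l1 - l2 - j) =
   Y0 ^+ (j + l2) * (Z0 ^+ (l1 - l2 - j) * (Z1 ^+ l2 * 1)) + Y1 * (Y0 ^+ j * s * Z0 ^+ (l1 - l2 - j)).
  by rewrite exprMn exprD; ring.
rewrite mcoefD mcoef_XM; last lia.
rewrite /Ee F1 /= addr0 subn0.
have -> : (l1 - (j + l2) = l1 - l2 - j)%N by lia.
exact: mono_coef.
Qed.

Lemma sum_pos (e : nat -> nat) i : (i < d)%N -> (0 < e i)%N -> (0 < \sum_(k < d) e k)%N.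
Proof.
move=> hi he; rewrite (bigD1 (Ordinal hi)) //=; exact: ltn_addr.
Qed.

Lemma eigC k1 k2 (f : R) c e :
  Eop (d + d) (mvar K (d + d) k1) (mvar K (d + d) k2) k1 k2 f = c%:R * f ->
  mcoef K (d + d) f e != 0 -> (k1 < d + d)%N -> (k2 < d + d)%N -> (e k1 + e k2)%N = c.
Proof. by move=> H nz h1 h2; apply: (@eig_coef charK0 _ _ _ _ _ _ h1 h2 H nz). Qed.

Lemma case2_Hy j : Eop (d + d) Y0 Y1 0 1 (Y0 ^+ j * Dl ^+ l2 * Z0 ^+ (l1 - l2 - j)) =
   (j + l2)%:R * (Y0 ^+ j * Dl ^+ l2 * Z0 ^+ (l1 - l2 - j)).
Proof. rewrite (@w_eig _ _ _ _ 1 0 1); try lia; try eigc. Qed.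

Lemma case2_hwv j : (0 < j + l2)%N -> (j < l1)%N -> (j <= l1 - l2)%N -> (l2 <= l1)%N ->
  is_hwv K d (wt l1 l2) (Y0 ^+ j * Dl ^+ l2 * Z0 ^+ (l1 - l2 - j)).
Proof.
move=> hl2 hj0 hj hl; set w := (Y0 ^+ j * Dl ^+ l2 * Z0 ^+ (l1 - l2 - j)).
have Hy : Eop (d + d) Y0 Y1 0 1 w = (j + l2)%:R * w by exact: case2_Hy.
have Hz : Eop (d + d) Z0 Z1 d (d + 1) w = (l1 - j)%:R * w.
  rewrite /w (@w_eig _ _ _ _ 0 1 1); try lia; try eigc.
  by rewrite mul0rn add0r -natrD; congr (_%:R * _); lia.
split.
- apply/eqP => w0; have := @case2_top j hj hl; rewrite -/w w0 mcoef0 => /eqP.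
  by rewrite eq_sym oner_eq0.
- move=> e nz; split.
    have E := @eigC _ _ _ _ _ Hy nz ltac:(lia) ltac:(lia).
    case: (posnP (e 0%N)) => h0; first by apply: (@sum_pos e 1%N); lia.
    by apply: (@sum_pos e 0%N) => //; lia.
  have E := @eigC _ _ _ _ _ Hz nz ltac:(lia) ltac:(lia).
  case: (posnP (e d)) => h0.
    by apply: (@sum_pos (fun i => e (d + i)%N) 1%N) => //=; lia.
  by apply: (@sum_pos (fun i => e (d + i)%N) 0%N) => //=; rewrite ?addn0; lia.
- move=> e nz i hi; rewrite /wt.
  case: i hi => [|[|i]] hi /=.
  + have H : Eop (d + d) Y0 Z0 0 d w = l1%:R * w.
      rewrite /w (@w_eig _ _ _ _ 1 1 1); try lia; try eigc.
      by rewrite -!natrD; congr (_%:R * _); lia.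
    by have := @eigC _ _ _ _ _ H nz ltac:(lia) ltac:(lia); rewrite addn0.
  + have H : Eop (d + d) Y1 Z1 1 (d + 1) w = l2%:R * w.
      rewrite /w (@w_eig _ _ _ _ 0 0 1); try lia; try eigc.
    exact: (@eigC _ _ _ _ _ H nz ltac:(lia) ltac:(lia)).
  + have H : Eop (d + d) (mvar K (d + d) i.+2) (mvar K (d + d) (d + i.+2)) i.+2 (d + i.+2) w = 0%:R * w.
      rewrite /w (@w_eig _ _ _ _ 0 0 0); try lia; try eigc.
    exact: (@eigC _ _ _ _ _ H nz ltac:(lia) ltac:(lia)).
- move=> i k hik hk; rewrite /Dder -/(Eop _ _ _ _ _ _).
  case: k hik hk => [|[|k]] hik hk //.
    have -> : i = 0%N by lia.
    rewrite /y /z addn0 /w (@w_eig _ _ _ _ 0 0 0); try lia; try eigc.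
  rewrite /w (@w_eig _ _ _ _ 0 0 0); try lia; try eigc.
Qed.

Lemma case2_coef j a : (j <= l1 - l2)%N -> (l2 <= l1)%N ->
  mcoef K (d + d) (Y0 ^+ j * Dl ^+ l2 * Z0 ^+ (l1 - l2 - j)) (Ee a 0) = (a == j + l2)%N%:R.
Proof.
move=> hj hl; case: eqP => [->|ne]; first exact: case2_top.
case: (mcoef K (d + d) (Y0 ^+ j * Dl ^+ l2 * Z0 ^+ (l1 - l2 - j)) (Ee a 0) =P 0) => // /eqP nz.
have := @eigC _ _ _ _ _ (case2_Hy j) nz ltac:(lia) ltac:(lia).
by rewrite /Ee F0 F1 addn0.
Qed.


End Main.
End S.

Theorem lemma3p3 (K : fieldType) (charK0 : [pchar K] =i pred0)
  (d n l1 l2 : nat) (hd : (2 <= d)%N) (hn : (2 <= n)%N)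
  (hl : (l2 <= l1)%N) (hsum : (l1 + l2)%N = n) :
  (l2 = 0%N ->
     max_hwv_system K d (wt l1 l2) _
       (fun j : 'I_(n - 1)%N =>
          y K d 0 ^+ (j + 1)%N * z K d 0 ^+ (n - (j + 1)%N))) /\
  ((0 < l2)%N ->
     max_hwv_system K d (wt l1 l2) _
       (fun j : 'I_(l1 - l2 + 1)%N =>
          y K d 0 ^+ j * (y K d 0 * z K d 1 - y K d 1 * z K d 0) ^+ l2
            * z K d 0 ^+ (l1 - l2 - j)%N)).
Proof.
split => [hl2|hl2].
  subst l2; rewrite addn0 in hsum; subst n.
  have Ew : forall k : 'I_(l1 - 1), y K d 0 ^+ (k + 1) * z K d 0 ^+ (l1 - (k + 1)) =
     mvar K (d + d) 0 ^+ (k + 1) *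
     (mvar K (d + d) 0 * mvar K (d + d) (d + 1) - mvar K (d + d) 1 * mvar K (d + d) d) ^+ 0 *
     mvar K (d + d) d ^+ (l1 - 0 - (k + 1)).
    by move=> k; rewrite /y /z addn0 expr0 mulr1 subn0.
  apply: (@gen K charK0 d l1 0 hd _ 1); first lia.
  - move=> k; rewrite Ew; apply: case2_hwv => //; have := ltn_ord k; lia.
  - move=> k a ha; rewrite Ew case2_coef ?addn0 //; have := ltn_ord k; lia.
  - move=> f [_ fG _ _] a ha hb.
    case: (mcoef K (d + d) f (Ee d l1 0 a 0) =P 0) => // /eqP nz.
    have [hy hz] := fG _ nz.
    exfalso; have [a0|an] : a = 0%N \/ a = l1 by lia.
      move: hy; rewrite big1 // => i _; rewrite /Ee /F a0.
      have := ltn_ord i; move: (nat_of_ord i) => m hm.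
      repeat (match goal with |- context [?x == ?y] => case: (x =P y) => ? end; simpl); lia.
    move: hz; rewrite big1 // => i _; rewrite /Ee /F an.
    have := ltn_ord i; move: (nat_of_ord i) => m hm.
    repeat (match goal with |- context [?x == ?y] => case: (x =P y) => ? end; simpl); lia.
have Ew : forall k : 'I_(l1 - l2 + 1), y K d 0 ^+ k * (y K d 0 * z K d 1 - y K d 1 * z K d 0) ^+ l2
            * z K d 0 ^+ (l1 - l2 - k) =
     mvar K (d + d) 0 ^+ k *
     (mvar K (d + d) 0 * mvar K (d + d) (d + 1) - mvar K (d + d) 1 * mvar K (d + d) d) ^+ l2 *
     mvar K (d + d) d ^+ (l1 - l2 - k).
  by move=> k; rewrite /y /z addn0.
apply: (@gen K charK0 d l1 l2 hd _ l2); first lia.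
- move=> k; rewrite Ew; apply: case2_hwv => //; have := ltn_ord k; lia.
- move=> k a ha; rewrite Ew case2_coef //; have := ltn_ord k; lia.
- move=> f [_ _ _ fD] a ha hb.
  apply: low_coef => //; last lia.
  by apply: fD; lia.
Qed.
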